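(* Let $N\ge1$, $\Lambda=\{0,1,\dots,N\}$, and let $T$ be the $(N+1)\times(N+1)$ Toeplitz matrix whose $(i,j)$ entry is $a_{i-j}$ ($i,j\in\Lambda$, with $a_{-N},\dots,a_N\in\mathbb{C}$), acting on $\mathbb{C}^{N+1}$ with standard basis $\{e_n\}_{n\in\Lambda}$. Let $C$ be a conjugation on $\mathbb{C}^{N+1}$ and $\{f_n\}_{n\in\Lambda}$ an orthonormal basis with $Cf_n=f_n$ for all $n$, and put $c_{n,m}=\sum_{k=0}^N\langle f_k,e_n\rangle\langle f_k,e_m\rangle$ for $m,n\in\Lambda$. Then $T$ is $C$-symmetric if and only if \[ \sum_{m=0}^{N}c_{m,p}\,\bar a_{m-k}=\sum_{m=0}^{N}c_{m,k}\,\bar a_{m-p}\qquad\text{for all }k,p\in\Lambda. \]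
   Context: A conjugation is an anti-linear, involutive ($C^2=I$), isometric map; $T$ is $C$-symmetric if $CT^*C=T$. The inner product on $\mathbb{C}^{N+1}$ is linear in the first entry. *)

(* Defs.v *)
From HB Require Import structures.
From mathcomp Require Import all_boot all_order all_algebra.
From mathcomp Require Import complex.
From mathcomp Require Import reals.
Set Implicit Arguments. Unset Strict Implicit. Unset Printing Implicit Defensive.
Import Order.TTheory GRing.Theory Num.Theory.
Local Open Scope ring_scope.
Local Open Scope complex_scope.

Section Defs.
Variables (R : realType) (n : nat).
Local Notation CC := (R[i]).
Local Notation vec := 'cV[CC]_n.

Definition inner (x y : vec) : CC := \sum_(i < n) x i 0 * (y i 0)^*.

Definition ebasis (k : 'I_n) : vec := delta_mx k 0.

Definition is_conjugation (C : vec -> vec) : Prop :=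
  [/\ forall (a : CC) (x y : vec), C (a *: x + y) = a^* *: C x + C y,
      forall x, C (C x) = x
    & forall x, inner (C x) (C x) = inner x x].

Definition adjmx (T : 'M[CC]_n) : 'M[CC]_n := map_mx (fun z => z^*) T^T.

Definition C_symmetric (C : vec -> vec) (T : 'M[CC]_n) : Prop :=
  forall x : vec, C (adjmx T *m C x) = T *m x.

(* orthonormal family of n vectors (hence a basis of C^n) *)
Definition orthonormal_basis (f : 'I_n -> vec) : Prop :=
  forall i j, inner (f i) (f j) = (i == j)%:R.

End Defs.
Arguments ebasis {R n}.

Definition toeplitz (R : realType) (N : nat) (a : int -> R[i]) : 'M[R[i]]_(N.+1) :=
  \matrix_(i, j) a (i%:Z - j%:Z).

Definition cnm (R : realType) (N : nat) (f : 'I_N.+1 -> 'cV[R[i]]_(N.+1))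
  (n m : 'I_N.+1) : R[i] :=
  \sum_(k < N.+1) inner (f k) (ebasis n) * inner (f k) (ebasis m).

(* Main.v *)
Require Import Defs.
From HB Require Import structures.
From mathcomp Require Import all_boot all_order all_algebra.
From mathcomp Require Import complex.
From mathcomp Require Import reals.
Import Order.TTheory GRing.Theory Num.Theory.
Local Open Scope ring_scope.

Section Aux.
Variable R : realType.
Variable n : nat.
Local Notation CC := (R[i]).
Definition Jm (A : 'M[CC]_n) := map_mx (@Num.conj CC) A.
Definition Jv (A : 'cV[CC]_n) := map_mx (@Num.conj CC) A.
Lemma JM (A B : 'M[CC]_n) : Jm (A *m B) = Jm A *m Jm B.
Proof. exact: map_mxM. Qed.
Lemma JMv (A : 'M[CC]_n) (B : 'cV[CC]_n) : Jv (A *m B) = Jm A *m Jv B.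
Proof. exact: map_mxM. Qed.
Lemma JK A : Jm (Jm A) = A.
Proof. by apply/matrixP=> i j; rewrite !mxE conjCK. Qed.
Lemma JKv A : Jv (Jv A) = A.
Proof. by apply/matrixP=> i j; rewrite !mxE conjCK. Qed.
Lemma Jtr A : Jm A^T = (Jm A)^T.
Proof. by rewrite /Jm map_trmx. Qed.
Lemma J1 : Jm 1%:M = 1%:M.
Proof. by apply/matrixP=> i j; rewrite !mxE; case: (i == j); rewrite ?conjC1 ?conjC0. Qed.

Lemma mx_ext (A B : 'M[CC]_n) : (forall x : 'cV[CC]_n, A *m x = B *m x) -> A = B.
Proof.
move=> h; apply/matrixP=> i j.
have := congr1 (fun M : 'cV[CC]_n => M i 0) (h (delta_mx j 0)).
by rewrite -!colE !mxE.
Qed.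

Variables (C : 'cV[CC]_n -> 'cV[CC]_n) (f : 'I_n -> 'cV[CC]_n).
Hypotheses (hC : is_conjugation C) (hf : orthonormal_basis f)
  (hCf : forall k, C (f k) = f k).

Definition Fm : 'M[CC]_n := \matrix_(i, j) f j i 0.
Definition Um := Fm *m Fm^T.

Lemma FJF : Fm^T *m Jm Fm = 1%:M.
Proof.
apply/matrixP=> i j; rewrite !mxE -hf /inner.
by apply: eq_bigr => l _; rewrite !mxE.
Qed.

Lemma JFF : Jm Fm *m Fm^T = 1%:M.
Proof. exact: mulmx1C FJF. Qed.

Lemma FJFt : Fm *m (Jm Fm)^T = 1%:M.
Proof.
have := congr1 (@Jm) JFF.
by rewrite JM JK J1 -Jtr => ->.
Qed.

Lemma Cadd x y : C (x + y) = C x + C y.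
Proof. by case: hC => h _ _; rewrite -[x]scale1r h conjC1 !scale1r. Qed.
Lemma C0 : C 0 = 0.
Proof.
have h := Cadd 0 0; rewrite addr0 in h.
by apply: (addrI (C 0)); rewrite addr0 -h.
Qed.
Lemma Cscale a x : C (a *: x) = Num.conj a *: C x.
Proof. by case: hC => h _ _; rewrite -[a *: x]addr0 h C0 addr0. Qed.

Lemma Cform x : C x = Um *m Jv x.
Proof.
set y := (Jm Fm)^T *m x.
have ex : x = \sum_k y k 0 *: f k.
  rewrite -[LHS]mul1mx -FJFt -mulmxA -/y.
  apply/matrixP=> i j; rewrite !mxE summxE; apply: eq_bigr => k _.
  by rewrite !mxE mulrC (ord1 j).
rewrite [in LHS]ex (big_morph C Cadd C0).
under eq_bigr do rewrite Cscale hCf.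
have yE : Fm^T *m Jv x = Jv y by rewrite /y JMv Jtr JK.
rewrite /Um -mulmxA yE.
apply/matrixP=> i j; rewrite !mxE summxE; apply: eq_bigr => k _.
by rewrite !mxE mulrC (ord1 j).
Qed.

Lemma UJU : Um *m Jm Um = 1%:M.
Proof.
rewrite /Um JM Jtr mulmxA -(mulmxA Fm) FJF mulmx1; exact: FJFt.
Qed.
Lemma JUU : Jm Um *m Um = 1%:M.
Proof. exact: mulmx1C UJU. Qed.
Lemma Utr : Um^T = Um.
Proof. by rewrite /Um trmx_mul trmxK. Qed.

Lemma Csym_iff (T : 'M[CC]_n) :
  C_symmetric C T <-> Jm Um *m T = T^T *m Jm Um.
Proof.
have adjE : adjmx T = Jm T^T by [].
have key : C_symmetric C T <-> Um *m T^T *m Jm Um = T.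
  split.
  - move=> h; apply: mx_ext => x; have := h x.
    by rewrite !Cform adjE JMv JMv JKv JK !mulmxA.
  - move=> h x; rewrite !Cform adjE JMv JMv JKv JK !mulmxA h; done.
split.
- move=> /key E.
  by rewrite -[X in Jm Um *m X = _]E (mulmxA (Jm Um)) (mulmxA (Jm Um) Um) JUU mul1mx.
- move=> h; apply/key.
  by rewrite -(mulmxA Um) -h mulmxA UJU mul1mx.
Qed.

End Aux.
Arguments Jm {R n}.
Arguments Jv {R n}.
Arguments Um {R n}.
Arguments Csym_iff {R n C f}.
Arguments JM {R n}.
Arguments JK {R n}.
Arguments Jtr {R n}.
Arguments Utr {R n f}.

Theorem theorem9p1 (R : realType) (N : nat) (hN : (1 <= N)%N)
  (a : int -> R[i]) (C : 'cV[R[i]]_(N.+1) -> 'cV[R[i]]_(N.+1))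
  (f : 'I_N.+1 -> 'cV[R[i]]_(N.+1)) :
  is_conjugation C -> orthonormal_basis f -> (forall k, C (f k) = f k) ->
  (C_symmetric C (toeplitz N a) <->
   forall k p : 'I_N.+1,
     \sum_(m < N.+1) cnm f m p * (a (m%:Z - k%:Z))^* =
     \sum_(m < N.+1) cnm f m k * (a (m%:Z - p%:Z))^*).
Proof.
move=> hC hf hCf.
set T := toeplitz N a.
have cE : forall m p, cnm f m p = Um f m p.
  move=> m p; rewrite /cnm /Um !mxE; apply: eq_bigr => k _.
  have ie : forall q, inner (f k) (ebasis q) = f k q 0.
    move=> q; rewrite /inner (bigD1 q) //= big1 ?addr0.
      by rewrite /ebasis !mxE !eqxx conjC1 mulr1.
    by move=> l /negbTE hl; rewrite /ebasis !mxE hl conjC0 mulr0.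
  by rewrite !ie !mxE.
have sE : forall k p : 'I_N.+1, \sum_(m < N.+1) cnm f m p * (a (m%:Z - k%:Z))^* =
                      (Jm T^T *m Um f) k p.
  move=> k p; rewrite !mxE; apply: eq_bigr => m _.
  by rewrite cE !mxE mulrC.
rewrite Csym_iff //.
transitivity (Jm T^T *m Um f = (Jm T^T *m Um f)^T).
- split.
  + move=> h; have := congr1 (@Jm _ _) h.
    rewrite (JM (Jm (Um f)) T) (JM T^T (Jm (Um f))) (JK (Um f)) => hJ.
    by rewrite trmx_mul Utr -Jtr trmxK hJ.
  + move=> h; move: h; rewrite trmx_mul Utr -Jtr trmxK => h.
    have := congr1 (@Jm _ _) h.
    by rewrite (JM (Jm T^T) (Um f)) (JM (Um f) (Jm T)) (JK T^T) (JK T).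
- split.
  + by move=> h k p; rewrite !sE {1}h mxE.
  + move=> h; apply/matrixP=> k p; by rewrite [RHS]mxE -!sE h.
Qed.
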